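(* The half line $\mathbb R_+=[0,\infty)$ (with the standard metric) is an absolute extensor in the category $\mathcal A$ and in the category $\tilde{\mathcal A}$.
   Context: A metric space is proper if all closed balls are compact; a map is proper if preimages of compact sets are compact; a map $f:X\to Y$ of metric spaces is asymptotically Lipschitz if there are $\lambda,s\ge0$ with $d_Y(f(x),f(x'))\le\lambda d_X(x,x')+s$ for all $x,x'$. The category $\mathcal A$ has proper metric spaces as objects and continuous proper asymptotically Lipschitz maps as morphisms. The category $\tilde{\mathcal A}$ has the same objects; its morphisms are morphisms $f:X\to Y$ of $\mathcal A$ with nonzero norm, meaning: for base points $x_0\in X$, $y_0\in Y$ there exist $c>0$, $b\ge0$ with $d_Y(f(x),y_0)\ge c\,d_X(x,x_0)-b$ for all $x\in X$ (this does not depend on the base points). An object $Y$ is an absolute extensor in such a category if for every object $X$, every closed subset $A\subset X$ with the induced metric, and every morphism $\phi:A\to Y$, there is a morphism $\bar\phi:X\to Y$ with $\bar\phi|_A=\phi$. *)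

(* Defs.v *)
From Stdlib Require Import Reals.
Open Scope R_scope.

Definition is_metric {X : Type} (d : X -> X -> R) : Prop :=
  (forall x y, 0 <= d x y) /\
  (forall x y, d x y = 0 <-> x = y) /\
  (forall x y, d x y = d y x) /\
  (forall x y z, d x z <= d x y + d y z).

Definition open_set {X : Type} (d : X -> X -> R) (U : X -> Prop) : Prop :=
  forall x, U x -> exists e, 0 < e /\ forall y, d x y < e -> U y.

Definition closed_set {X : Type} (d : X -> X -> R) (F : X -> Prop) : Prop :=
  open_set d (fun x => ~ F x).

Definition compact_set {X : Type} (d : X -> X -> R) (K : X -> Prop) : Prop :=
  forall (I : Type) (U : I -> X -> Prop),
    (forall i, open_set d (U i)) ->
    (forall x, K x -> exists i, U i x) ->
    exists l : list I, forall x, K x -> exists i, List.In i l /\ U i x.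

Definition closed_ball {X : Type} (d : X -> X -> R) (x : X) (r : R) : X -> Prop :=
  fun y => d x y <= r.

Definition proper_space {X : Type} (d : X -> X -> R) : Prop :=
  forall x r, compact_set d (closed_ball d x r).

Definition continuous_map {X Y : Type} (dX : X -> X -> R) (dY : Y -> Y -> R)
  (f : X -> Y) : Prop :=
  forall x e, 0 < e -> exists delta, 0 < delta /\
    forall x', dX x x' < delta -> dY (f x) (f x') < e.

Definition proper_map {X Y : Type} (dX : X -> X -> R) (dY : Y -> Y -> R)
  (f : X -> Y) : Prop :=
  forall K : Y -> Prop, compact_set dY K -> compact_set dX (fun x => K (f x)).

Definition asymptotically_lipschitz {X Y : Type} (dX : X -> X -> R)
  (dY : Y -> Y -> R) (f : X -> Y) : Prop :=
  exists lambda s, 0 <= lambda /\ 0 <= s /\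
    forall x x', dY (f x) (f x') <= lambda * dX x x' + s.

Definition morph_A {X Y : Type} (dX : X -> X -> R) (dY : Y -> Y -> R)
  (f : X -> Y) : Prop :=
  continuous_map dX dY f /\ proper_map dX dY f /\ asymptotically_lipschitz dX dY f.

(** Nonzero norm (stated for all base points; independent of them). *)
Definition nonzero_norm {X Y : Type} (dX : X -> X -> R) (dY : Y -> Y -> R)
  (f : X -> Y) : Prop :=
  forall (x0 : X) (y0 : Y), exists c b, 0 < c /\ 0 <= b /\
    forall x, dY (f x) y0 >= c * dX x x0 - b.

Definition morph_tA {X Y : Type} (dX : X -> X -> R) (dY : Y -> Y -> R)
  (f : X -> Y) : Prop :=
  morph_A dX dY f /\ nonzero_norm dX dY f.

Definition sub_dist {X : Type} (d : X -> X -> R) (A : X -> Prop) :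
  {x | A x} -> {x | A x} -> R :=
  fun a b => d (proj1_sig a) (proj1_sig b).

Definition Rplus_half := {r : R | 0 <= r}.
Definition dRplus (r s : Rplus_half) : R := Rabs (proj1_sig r - proj1_sig s).

Definition absolute_extensor
  (morph : forall (X Y : Type), (X -> X -> R) -> (Y -> Y -> R) -> (X -> Y) -> Prop)
  (Y : Type) (dY : Y -> Y -> R) : Prop :=
  forall (X : Type) (d : X -> X -> R),
    is_metric d -> proper_space d ->
    forall A : X -> Prop, closed_set d A ->
    forall phi : {x | A x} -> Y,
      morph _ _ (sub_dist d A) dY phi ->
      exists phibar : X -> Y,
        morph _ _ d dY phibar /\ forall a : {x | A x}, phibar (proj1_sig a) = phi a.

(* Main.v *)
From Pilot Require Import Defs.
From Stdlib Require Import Reals Lra Lia List Classical ClassicalEpsilon ProofIrrelevance.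
Import Pilot.Defs.
Open Scope R_scope.
Definition is_inf {T} (h:T->R) m := (forall t, m <= h t) /\ (forall m', (forall t, m' <= h t) -> m' <= m).
Definition Inf {T} (h:T->R) : R :=
  match excluded_middle_informative (exists m, is_inf h m) with
  | left H => proj1_sig (constructive_indefinite_description _ H)
  | right _ => 0 end.

Lemma Inf_spec {T} (t0:T) (h : T -> R) : (forall t, 0 <= h t) -> is_inf h (Inf h).
Proof.
  intros Hp.
  assert (Ex : exists m, is_inf h m).
  { destruct (completeness (fun y => exists t, y = - h t)) as [m [Hm1 Hm2]].
    - exists 0. intros y [t ->]. specialize (Hp t). lra.
    - exists (- h t0). eauto.
    - exists (- m). split.
      + intros t. assert (- h t <= m) by (apply Hm1; eauto). lra.
      + intros m' Hm'. assert (m <= - m'). { apply Hm2. intros y [t ->]. specialize (Hm' t). lra. } lra. }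
  unfold Inf. destruct excluded_middle_informative as [H|H].
  - exact (proj2_sig (constructive_indefinite_description _ H)).
  - contradiction.
Qed.

Lemma Inf_le {T} (t0:T) (h : T -> R) : (forall t, 0 <= h t) -> forall t, Inf h <= h t.
Proof. intros Hp t. apply (Inf_spec t0 h Hp). Qed.
Lemma Inf_ge {T} (t0:T) (h : T -> R) : (forall t, 0 <= h t) -> forall m, (forall t, m <= h t) -> m <= Inf h.
Proof. intros Hp m Hm. apply (Inf_spec t0 h Hp). exact Hm. Qed.
Lemma Inf_approx {T} (t0:T) (h : T -> R) : (forall t, 0 <= h t) -> forall e, 0 < e -> exists t, h t < Inf h + e.
Proof.
  intros Hp e He. apply NNPP. intros Hn.
  assert (Inf h + e <= Inf h). { apply (Inf_ge t0 h Hp). intros t. apply Rnot_lt_le. intro. apply Hn. eauto. }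
  lra.
Qed.
Lemma Rabs_le_inv a b : Rabs a <= b -> -b <= a <= b.
Proof. intros H. split_Rabs; lra. Qed.

Lemma Inf_close {T} (t0:T) (h1 h2 : T -> R) c : (forall t, 0 <= h1 t) -> (forall t, 0 <= h2 t) ->
  (forall t, Rabs (h1 t - h2 t) <= c) -> Rabs (Inf h1 - Inf h2) <= c.
Proof.
  intros H1 H2 Hc. apply Rabs_le. split.
  - assert (Inf h2 - c <= Inf h1); [|lra]. apply (Inf_ge t0 h1 H1). intros t.
    pose proof (Inf_le t0 h2 H2 t). pose proof (Rabs_le_inv _ _ (Hc t)). lra.
  - assert (Inf h1 - c <= Inf h2); [|lra]. apply (Inf_ge t0 h2 H2). intros t.
    pose proof (Inf_le t0 h1 H1 t). pose proof (Rabs_le_inv _ _ (Hc t)). lra.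
Qed.
Fixpoint somes {I : Type} (l : list (option I)) : list I :=
  match l with nil => nil | Some i :: t => i :: somes t | None :: t => somes t end.
Lemma somes_In {I} (l : list (option I)) i : In (Some i) l -> In i (somes l).
Proof. induction l as [|[j|] t IH]; simpl; intros H; [easy| |].
  - destruct H as [H|H]; [inversion H; auto| auto].
  - destruct H as [H|H]; [discriminate|auto]. Qed.

Fixpoint maxl (l : list nat) : nat := match l with nil => 0%nat | n :: t => Nat.max n (maxl t) end.
Lemma maxl_In l n : In n l -> (n <= maxl l)%nat.
Proof. induction l; simpl; intros H; [easy|]. destruct H; subst; lia || (apply IHl in H; lia). Qed.

Lemma closed_sub_compact {X} (d : X -> X -> R) K P :
  compact_set d K -> closed_set d P -> (forall x, P x -> K x) -> compact_set d P.
Proof.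
  intros HK HP HPK I U HU Hcov.
  destruct (HK (option I) (fun o => match o with Some i => U i | None => fun x => ~ P x end)) as [l Hl].
  - intros [i|]; [apply HU| apply HP].
  - intros x Kx. destruct (classic (P x)) as [Px|nPx].
    + destruct (Hcov x Px) as [i Hi]. exists (Some i). exact Hi.
    + exists None. exact nPx.
  - exists (somes l). intros x Px. destruct (Hl x (HPK x Px)) as [[i|] [Hin Hi]].
    + exists i. split; [apply somes_In; auto| auto].
    + contradiction.
Qed.

Lemma nat_above r : exists n : nat, r < INR n.
Proof. destruct (INR_unbounded r) as [n Hn]. exists n. lra. Qed.

Lemma compact_bounded {X} (d : X -> X -> R) K :
  (forall x y z, d x z <= d x y + d y z) ->
  compact_set d K -> forall x0, exists M, forall x, K x -> d x0 x <= M.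
Proof.
  intros Htri HK x0.
  destruct (HK nat (fun n x => d x0 x < INR n)) as [l Hl].
  - intros n x Hx. exists (INR n - d x0 x). split; [lra|]. intros y Hy. pose proof (Htri x0 x y). lra.
  - intros x _. apply nat_above.
  - exists (INR (maxl l)). intros x Kx. destruct (Hl x Kx) as [n [Hin Hn]].
    pose proof (le_INR _ _ (maxl_In l n Hin)). lra.
Qed.

Lemma small_inv e : 0 < e -> exists n : nat, / INR (S n) < e.
Proof.
  intros He. destruct (nat_above (/ e)) as [n Hn]. exists n.
  rewrite S_INR. pose proof (pos_INR n).
  assert (0 < / e) by (apply Rinv_0_lt_compat; lra).
  rewrite <- (Rinv_inv e) at 1. apply Rinv_lt_contravar; [apply Rmult_lt_0_compat; lra| lra].
Qed.

Lemma compact_closed {X} (d : X -> X -> R) K :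
  is_metric d -> compact_set d K -> closed_set d K.
Proof.
  intros [Hpos [Hz [Hsym Htri]]] HK y nKy.
  destruct (HK nat (fun n z => / INR (S n) < d y z)) as [l Hl].
  - intros n x Hx. exists (d y x - / INR (S n)). split; [lra|]. intros z Hz'.
    pose proof (Htri y z x). rewrite (Hsym z x) in H. lra.
  - intros z Kz. assert (0 < d y z).
    { destruct (Hpos y z) as [H|H]; auto. exfalso. symmetry in H. apply Hz in H. subst; auto. }
    apply small_inv; auto.
  - exists (/ INR (S (maxl l))). split.
    + apply Rinv_0_lt_compat. apply lt_0_INR. lia.
    + intros z Hyz Kz. destruct (Hl z Kz) as [n [Hin Hn]].
      pose proof (maxl_In l n Hin).
      assert (/ INR (S (maxl l)) <= / INR (S n)).
      { apply Rinv_le_contravar; [apply lt_0_INR; lia| apply le_INR; lia]. }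
      lra.
Qed.
Lemma Rplus_eq (u v : Rplus_half) : proj1_sig u = proj1_sig v -> u = v.
Proof. destruct u, v; simpl; intros ->. f_equal. apply proof_irrelevance. Qed.

Lemma dRplus_metric : is_metric dRplus.
Proof.
  unfold dRplus. split; [|split; [|split]].
  - intros; apply Rabs_pos.
  - intros x y; split.
    + intros H. apply Rplus_eq. split_Rabs; lra.
    + intros ->. rewrite Rminus_diag, Rabs_R0. reflexivity.
  - intros x y. split_Rabs; lra.
  - intros x y z. split_Rabs; lra.
Qed.

Lemma Rmax0_lip x y : Rabs (Rmax 0 x - Rmax 0 y) <= Rabs (x - y).
Proof. unfold Rmax; repeat destruct Rle_dec; split_Rabs; lra. Qed.

Lemma interval_compact R0 : compact_set dRplus (fun y => proj1_sig y <= R0).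
Proof.
  intros I U HU Hcov.
  destruct (Rlt_or_le R0 0) as [Hneg|Hnn].
  - exists nil. intros [y Hy] Hy'. cbn in Hy'. exfalso; lra.
  - destruct (Hcov (exist (fun r => 0 <= r) 0 (Rle_refl 0)) Hnn) as [i0 _].
    set (rp := fun r : R => exist (fun r => 0 <= r) (Rmax 0 r) (Rmax_l 0 r)).
    set (W := fun i r => U i (rp r)).
    set (c := fun r => match excluded_middle_informative (exists i, W i r) with
                       | left h => proj1_sig (constructive_indefinite_description _ h)
                       | right _ => i0 end).
    assert (Hc : forall r, (exists i, W i r) -> W (c r) r).
    { intros r h. unfold c. destruct excluded_middle_informative as [h'|h'].
      - exact (proj2_sig (constructive_indefinite_description _ h')).
      - contradiction. }
    assert (Hcf : forall x, (exists y, 0 <= x <= R0 /\ W (c x) y) -> 0 <= x <= R0).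
    { intros x [y [Hy _]]. exact Hy. }
    pose (fam := mkfamily (fun r => 0 <= r <= R0) (fun r y => 0 <= r <= R0 /\ W (c r) y) Hcf).
    destruct (compact_P3 0 R0 fam) as [D [Dcov [l Hl]]].
    + split.
      * intros x Hx. exists x. simpl. split; auto. apply Hc.
        assert (Hr : proj1_sig (rp x) <= R0). { simpl. unfold Rmax; destruct Rle_dec; lra. }
        destruct (Hcov (rp x) Hr) as [i Hi]. exists i. exact Hi.
      * intros r x [Hr Hx]. unfold W in Hx.
        destruct (HU (c r) (rp x) Hx) as [e [He He']].
        exists (mkposreal e He). intros y Hy. unfold disc in Hy. simpl in Hy. split; auto.
        apply He'. unfold dRplus. simpl. pose proof (Rmax0_lip x y).
        replace (Rabs (x - y)) with (Rabs (y - x)) in H by (split_Rabs; lra). lra.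
    + exists (map c l). intros [y Hy] Hy'. simpl in Hy'.
      destruct (Dcov y (conj Hy Hy')) as [r [[Hr Hw] Dr]].
      exists (c r). split.
      * apply in_map. apply Hl. split; auto.
      * unfold W in Hw. replace (exist (fun r0 : R => 0 <= r0) y Hy) with (rp y); auto.
        apply Rplus_eq. simpl. apply Rmax_right. exact Hy.
Qed.

Section GM.
Context {X : Type} (d : X -> X -> R) (Hd : is_metric d) (Hp : proper_space d)
  (G : X -> R) (H0 : forall x, 0 <= G x)
  (Hc : forall x e, 0 < e -> exists del, 0 < del /\ forall y, d x y < del -> Rabs (G x - G y) < e)
  (HL : exists L s, 0 <= L /\ 0 <= s /\ forall x y, Rabs (G x - G y) <= L * d x y + s)
  (Hb : forall R0, exists M, forall x y, G x <= R0 -> G y <= R0 -> d x y <= M).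

Definition GF (x : X) : Rplus_half := exist (fun r => 0 <= r) (G x) (H0 x).

Lemma Gmorph : morph_A d dRplus GF.
Proof.
  split; [|split].
  - intros x e He. destruct (Hc x e He) as [del [Hdel H]]. exists del. split; auto.
  - intros K HK. pose proof dRplus_metric as Hm.
    destruct Hm as [_ [_ [_ Htri]]].
    destruct (compact_bounded dRplus K Htri HK (exist (fun r => 0 <= r) 0 (Rle_refl 0))) as [M HM].
    assert (HKc := compact_closed dRplus K dRplus_metric HK).
    destruct (classic (exists x1, K (GF x1))) as [[x1 Hx1]|Hne].
    + destruct (Hb M) as [M' HM'].
      apply (closed_sub_compact d (closed_ball d x1 M')).
      * apply Hp.
      * intros x nKx. destruct (HKc (GF x) nKx) as [e [He He']].
        destruct (Hc x e He) as [del [Hdel H]]. exists del. split; auto.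
        intros y Hy. apply He'. apply H. auto.
      * intros x Kx. unfold closed_ball. apply HM'.
        -- pose proof (HM _ Hx1). unfold dRplus in H. simpl in H. pose proof (H0 x1). split_Rabs; lra.
        -- pose proof (HM _ Kx). unfold dRplus in H. simpl in H. pose proof (H0 x). split_Rabs; lra.
    + intros I U _ _. exists nil. intros x Kx. exfalso. eauto.
  - destruct HL as [L [s [HL0 [Hs HL']]]]. exists L, s. split; [|split]; auto.
Qed.

Lemma Gmorph_t (Hg : forall x0 : X, exists x1 c b, 0 < c /\ 0 <= b /\ forall x, c * d x x1 - b <= G x) :
  morph_tA d dRplus GF.
Proof.
  split; [apply Gmorph|]. intros x0 [y0 Hy0].
  destruct (Hg x0) as [x1 [c [b [Hcp [Hb0 Hx]]]]].
  destruct Hd as [Hpos [_ [Hsym Htri]]].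
  exists c, (b + y0 + c * d x0 x1). split; [|split]; auto.
  - pose proof (Hpos x0 x1). pose proof (Rmult_le_pos c _ (Rlt_le _ _ Hcp) H). lra.
  - intros x. unfold dRplus. simpl. specialize (Hx x). pose proof (Htri x x1 x0). rewrite (Hsym x1 x0) in H.
    pose proof (Rmult_le_compat_l c _ _ (Rlt_le _ _ Hcp) H).
    pose proof (Rle_abs (G x - y0)). apply Rle_ge. rewrite Rmult_plus_distr_l in H1. lra.
Qed.
End GM.
Lemma Rmin_lip a b c e del : Rabs (a - c) <= del -> Rabs (b - e) <= del -> Rabs (Rmin a b - Rmin c e) <= del.
Proof. intros H1 H2. unfold Rmin; repeat destruct Rle_dec; split_Rabs; lra. Qed.

Lemma ratio_bounds p u : 0 < p -> p <= u -> 1 <= Rmin (2*p) u / p <= 2.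
Proof.
  intros Hp Hu. set (t := Rmin (2*p) u / p).
  assert (Ht : Rmin (2*p) u = t * p) by (unfold t; field; lra).
  assert (p <= Rmin (2*p) u <= 2 * p) by (unfold Rmin; destruct Rle_dec; lra).
  rewrite Ht in H. split; nra.
Qed.

Lemma ratio_cont p q u v del : 0 < p -> 0 < q -> 0 <= v -> Rabs (p - q) <= del -> Rabs (u - v) <= del ->
  Rabs (Rmin (2*p) u / p - Rmin (2*q) v / q) <= 4 * del / p.
Proof.
  intros Hp Hq Hv H1 H2.
  assert (Hm : Rabs (Rmin (2*p) u - Rmin (2*q) v) <= 2 * del).
  { apply Rmin_lip; split_Rabs; lra. }
  set (m1 := Rmin (2*p) u) in *. set (m2 := Rmin (2*q) v) in *.
  set (t2 := m2 / q).
  assert (Ht2 : m2 = t2 * q) by (unfold t2; field; lra).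
  assert (0 <= m2 <= 2 * q) by (unfold m2, Rmin; destruct Rle_dec; lra).
  assert (0 <= t2 <= 2) by (rewrite Ht2 in H; split; nra).
  set (z := m1 / p - t2).
  assert (Hz : z * p = m1 - m2 + t2 * (q - p)) by (unfold z; rewrite Ht2; field; lra).
  assert (Hzp : Rabs (z * p) <= 4 * del).
  { rewrite Hz. pose proof (Rabs_triang (m1 - m2) (t2 * (q - p))) as Htr.
    rewrite Rabs_mult in Htr. rewrite (Rabs_pos_eq t2) in Htr by lra.
    assert (Hqp : Rabs (q - p) <= del) by (split_Rabs; lra).
    pose proof (Rabs_pos (q - p)). assert (t2 * Rabs (q - p) <= 2 * del) by nra. lra. }
  rewrite Rabs_mult, (Rabs_pos_eq p) in Hzp by lra.
  apply (Rmult_le_reg_r p); [lra|]. unfold Rdiv. rewrite Rmult_assoc, Rinv_l by lra.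
  unfold z in Hzp. unfold z. lra.
Qed.

Lemma le_div_mul a b c : 0 < b -> a <= c / b -> a * b <= c.
Proof. intros Hb H. apply (Rmult_le_compat_r b) in H; [|lra]. unfold Rdiv in H. rewrite Rmult_assoc, Rinv_l in H by lra. lra. Qed.
Lemma lt_div_mul a b c : 0 < b -> a < c / b -> a * b < c.
Proof. intros Hb H. apply (Rmult_lt_compat_r b) in H; [|lra]. unfold Rdiv in H. rewrite Rmult_assoc, Rinv_l in H by lra. lra. Qed.
Lemma div_pos a b : 0 < a -> 0 < b -> 0 < a / b.
Proof. intros. unfold Rdiv. apply Rmult_lt_0_compat; auto. apply Rinv_0_lt_compat; auto. Qed.

Lemma mul_le_div a b c : 0 < b -> b * a <= c -> a <= c / b.
Proof. intros Hb H. apply (Rmult_le_reg_l b); auto. replace (b * (c / b)) with c by (field; lra). auto. Qed.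

Section Main.
Context {X : Type} (d : X -> X -> R) (Hd : is_metric d)
  (A : X -> Prop) (HA : closed_set d A) (phi : {x | A x} -> Rplus_half)
  (a0 : {x | A x}) (lam s : R) (Hlam : 0 <= lam) (Hs : 0 <= s)
  (Hlip : forall a b, dRplus (phi a) (phi b) <= lam * sub_dist d A a b + s)
  (Hcont : continuous_map (sub_dist d A) dRplus phi).

Let dpos : forall x y, 0 <= d x y. Proof. apply Hd. Qed.
Let dsym : forall x y, d x y = d y x. Proof. apply Hd. Qed.
Let dtri : forall x y z, d x z <= d x y + d y z. Proof. apply Hd. Qed.
Let dzero : forall x, d x x = 0. Proof. intros; apply Hd; auto. Qed.

Definition f (a : {x | A x}) : R := proj1_sig (phi a).
Lemma f_pos a : 0 <= f a. Proof. exact (proj2_sig (phi a)). Qed.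
Lemma f_lip a b : f b <= f a + lam * d (proj1_sig a) (proj1_sig b) + s.
Proof. pose proof (Hlip a b). unfold dRplus, sub_dist in H. fold (f a) (f b) in H. split_Rabs; lra. Qed.

Definition Kc := lam + 1.
Definition s1 := s + 1.
Definition pd (x : X) : R := Inf (fun a : {x | A x} => d x (proj1_sig a)).
Definition gg (x : X) (a : {x | A x}) : R :=
  f a + Kc * d x (proj1_sig a) + (s1 * (Rmin (2 * pd x) (d x (proj1_sig a)) / pd x) - s1).
Definition G (x : X) : R :=
  match excluded_middle_informative (A x) with
  | left H => f (exist _ x H)
  | right _ => Inf (gg x) end.

Lemma pd_le x (a : {x | A x}) : pd x <= d x (proj1_sig a).
Proof. exact (Inf_le a0 (fun a => d x (proj1_sig a)) (fun _ => dpos _ _) a). Qed.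
Lemma pd_nonneg x : 0 <= pd x.
Proof. apply (Inf_ge a0 (fun a => d x (proj1_sig a))). intros; apply dpos. intros; apply dpos. Qed.
Lemma pd_pos x : ~ A x -> 0 < pd x.
Proof.
  intros nA. destruct (HA x nA) as [e [He He']].
  assert (e <= pd x); [|lra]. apply (Inf_ge a0 (fun a => d x (proj1_sig a))). intros; apply dpos.
  intros [y Hy]. simpl. apply Rnot_lt_le. intros H. apply (He' y H Hy).
Qed.
Lemma pd_lip x y : Rabs (pd x - pd y) <= d x y.
Proof.
  apply (Inf_close a0 (fun a => d x (proj1_sig a)) (fun a => d y (proj1_sig a))); try (intros; apply dpos).
  intros [z Hz]; simpl. pose proof (dtri x y z). pose proof (dtri y x z). rewrite (dsym y x) in H0.
  split_Rabs; lra.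
Qed.

Lemma Q_bounds x (a : {x | A x}) : ~ A x ->
  0 <= s1 * (Rmin (2 * pd x) (d x (proj1_sig a)) / pd x) - s1 <= s1.
Proof.
  intros nA. pose proof (ratio_bounds _ _ (pd_pos x nA) (pd_le x a)). unfold s1 in *. nra.
Qed.
Lemma gg_ge x (a : {x | A x}) : ~ A x -> f a + Kc * d x (proj1_sig a) <= gg x a.
Proof. intros nA. unfold gg. pose proof (Q_bounds x a nA). lra. Qed.
Lemma gg_pos x (a : {x | A x}) : ~ A x -> 0 <= gg x a.
Proof. intros nA. pose proof (gg_ge x a nA). pose proof (f_pos a). pose proof (dpos x (proj1_sig a)).
  unfold Kc in *. nra. Qed.

Lemma G_A x (H : A x) : G x = f (exist _ x H).
Proof. unfold G. destruct excluded_middle_informative as [H'|H']; [|contradiction].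
  f_equal. f_equal. apply proof_irrelevance. Qed.
Lemma G_nA x : ~ A x -> G x = Inf (gg x).
Proof. intros nA. unfold G. destruct excluded_middle_informative; [contradiction|auto]. Qed.

Lemma G_pos x : 0 <= G x.
Proof. destruct (classic (A x)) as [H|H].
  - rewrite (G_A x H). apply f_pos.
  - rewrite (G_nA x H). apply (Inf_ge a0 (gg x)). intros; apply gg_pos; auto. intros; apply gg_pos; auto. Qed.


Lemma mul_le c u v : 0 <= c -> u <= v -> c * u <= c * v.
Proof. intros; apply Rmult_le_compat_l; auto. Qed.

Lemma G_lip_mixed x y (Hx : A x) : ~ A y -> Rabs (G x - G y) <= Kc * d x y + s1.
Proof.
  intros nAy. rewrite (G_A x Hx), (G_nA y nAy).
  set (ax := exist A x Hx).
  assert (Hup : Inf (gg y) <= f ax + Kc * d x y + s1).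
  { eapply Rle_trans. apply (Inf_le a0 (gg y) (fun a => gg_pos y a nAy) ax).
    unfold gg. pose proof (Q_bounds y ax nAy). change (proj1_sig ax) with x in *. rewrite (dsym y x) in *. lra. }
  assert (Hlo : f ax - lam * d x y - s <= Inf (gg y)).
  { apply (Inf_ge a0 (gg y) (fun a => gg_pos y a nAy)). intros a.
    pose proof (gg_ge y a nAy). pose proof (f_lip a ax). simpl in H0.
    pose proof (dtri (proj1_sig a) y x). rewrite (dsym (proj1_sig a) y), (dsym y x) in H1.
    pose proof (mul_le lam _ _ Hlam H1). pose proof (dpos y (proj1_sig a)).
    pose proof (mul_le lam _ _ Hlam (Rle_refl (d y (proj1_sig a)))).
    unfold Kc in H. rewrite Rmult_plus_distr_r in H. nra. }
  pose proof (dpos x y). pose proof (mul_le lam _ _ Hlam H). unfold Kc, s1 in *. rewrite Rmult_plus_distr_r in *.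
  apply Rabs_le. lra.
Qed.

Lemma G_lip x y : Rabs (G x - G y) <= Kc * d x y + s1.
Proof.
  destruct (classic (A x)) as [Hx|Hx]; destruct (classic (A y)) as [Hy|Hy].
  - rewrite (G_A x Hx), (G_A y Hy). pose proof (f_lip (exist _ x Hx) (exist _ y Hy)).
    pose proof (f_lip (exist _ y Hy) (exist _ x Hx)). simpl in *. rewrite (dsym y x) in H0.
    pose proof (dpos x y). unfold Kc, s1. rewrite Rmult_plus_distr_r. apply Rabs_le. lra.
  - apply G_lip_mixed; auto.
  - rewrite Rabs_minus_sym, dsym. apply G_lip_mixed; auto.
  - rewrite (G_nA x Hx), (G_nA y Hy).
    apply (Inf_close a0 (gg x) (gg y) _ (fun a => gg_pos x a Hx) (fun a => gg_pos y a Hy)).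
    intros a. unfold gg. pose proof (Q_bounds x a Hx). pose proof (Q_bounds y a Hy).
    set (qx := s1 * (Rmin (2 * pd x) (d x (proj1_sig a)) / pd x) - s1) in *.
    set (qy := s1 * (Rmin (2 * pd y) (d y (proj1_sig a)) / pd y) - s1) in *.
    assert (Hu : Rabs (d x (proj1_sig a) - d y (proj1_sig a)) <= d x y).
    { pose proof (dtri x y (proj1_sig a)). pose proof (dtri y x (proj1_sig a)). rewrite (dsym y x) in H2.
      split_Rabs; lra. }
    assert (Kc * Rabs (d x (proj1_sig a) - d y (proj1_sig a)) <= Kc * d x y) by (apply mul_le; unfold Kc; lra).
    replace (f a + Kc * d x (proj1_sig a) + qx - (f a + Kc * d y (proj1_sig a) + qy))
      with (Kc * (d x (proj1_sig a) - d y (proj1_sig a)) + (qx - qy)) by ring.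
    eapply Rle_trans. apply Rabs_triang. rewrite Rabs_mult, (Rabs_pos_eq Kc) by (unfold Kc; lra).
    assert (Rabs (qx - qy) <= s1) by (split_Rabs; lra). lra.
Qed.


Lemma G_cont_out x e : ~ A x -> 0 < e -> exists del, 0 < del /\ forall y, d x y < del -> Rabs (G x - G y) < e.
Proof.
  intros nAx He. assert (Hr : 0 < pd x) by (apply pd_pos; auto).
  set (C := Kc + 4 * s1 / pd x).
  assert (HC : 0 <= C). { unfold C. assert (0 < 4 * s1 / pd x) by (apply div_pos; unfold s1; lra). unfold Kc; lra. }
  exists (Rmin (pd x) (e / (C + 1))). split.
  { apply Rmin_glb_lt; auto. apply div_pos; lra. }
  intros y Hy. pose proof (Rmin_l (pd x) (e / (C + 1))). pose proof (Rmin_r (pd x) (e / (C + 1))).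
  assert (nAy : ~ A y). { intros Ay. pose proof (pd_le x (exist _ y Ay)). simpl in H1. lra. }
  assert (Hq : 0 < pd y) by (apply pd_pos; auto).
  rewrite (G_nA x nAx), (G_nA y nAy).
  pose proof (dpos x y) as Hxy.
  assert (Hb : Rabs (Inf (gg x) - Inf (gg y)) <= C * d x y).
  { apply (Inf_close a0 (gg x) (gg y) _ (fun a => gg_pos x a nAx) (fun a => gg_pos y a nAy)).
    intros a. unfold gg.
    assert (Hu : Rabs (d x (proj1_sig a) - d y (proj1_sig a)) <= d x y).
    { pose proof (dtri x y (proj1_sig a)). pose proof (dtri y x (proj1_sig a)). rewrite (dsym y x) in H2.
      split_Rabs; lra. }
    pose proof (ratio_cont (pd x) (pd y) (d x (proj1_sig a)) (d y (proj1_sig a)) (d x y) Hr Hq (dpos _ _) (pd_lip x y) Hu) as Hrc.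
    set (tx := Rmin (2 * pd x) (d x (proj1_sig a)) / pd x) in *.
    set (ty := Rmin (2 * pd y) (d y (proj1_sig a)) / pd y) in *.
    replace (f a + Kc * d x (proj1_sig a) + (s1 * tx - s1) - (f a + Kc * d y (proj1_sig a) + (s1 * ty - s1)))
      with (Kc * (d x (proj1_sig a) - d y (proj1_sig a)) + s1 * (tx - ty)) by ring.
    eapply Rle_trans. apply Rabs_triang.
    rewrite !Rabs_mult, (Rabs_pos_eq Kc), (Rabs_pos_eq s1) by (unfold Kc, s1; lra).
    assert (HK1 : Kc * Rabs (d x (proj1_sig a) - d y (proj1_sig a)) <= Kc * d x y) by (apply mul_le; unfold Kc; lra).
    assert (HS1 : s1 * Rabs (tx - ty) <= s1 * (4 * d x y / pd x)) by (apply mul_le; unfold s1; lra).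
    unfold C. replace (s1 * (4 * d x y / pd x)) with (4 * s1 / pd x * d x y) in HS1 by (field; lra).
    rewrite Rmult_plus_distr_r. lra. }
  assert (Hlt : d x y * (C + 1) < e) by (apply lt_div_mul; lra).
  assert (C * d x y <= d x y * (C + 1)) by nra. lra.
Qed.

Lemma G_cont_in x e : A x -> 0 < e -> exists del, 0 < del /\ forall y, d x y < del -> Rabs (G x - G y) < e.
Proof.
  intros Ax He.
  set (a := (exist _ x Ax : {x | A x})).
  destruct (Hcont a (e/3)) as [del1 [Hd1 Hc1]]; [lra|].
  assert (Hc1' : forall b, d x (proj1_sig b) < del1 -> Rabs (f a - f b) < e/3).
  { intros b Hb. apply (Hc1 b Hb). }
  clear Hc1.
  set (eta := Rmin (Rmin (del1/3) (1/(lam+1))) (e / (6*(Kc+1)))).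
  assert (HKc : 0 < Kc) by (unfold Kc; lra).
  assert (Heta : 0 < eta).
  { unfold eta. repeat apply Rmin_glb_lt; apply div_pos; lra. }
  assert (E1 : eta <= del1/3) by (unfold eta; eapply Rle_trans; [apply Rmin_l|apply Rmin_l]).
  assert (E2 : lam * eta <= 1).
  { assert (eta <= 1/(lam+1)) by (unfold eta; eapply Rle_trans; [apply Rmin_l|apply Rmin_r]).
    apply le_div_mul in H; [|lra]. nra. }
  assert (E3 : 2 * Kc * eta <= e/3).
  { assert (eta <= e / (6*(Kc+1))) by (unfold eta; apply Rmin_r).
    apply le_div_mul in H; [|lra]. nra. }
  set (ep := Rmin 1 (e / (3 * (s1 + 1)))).
  assert (Hs1 : 0 < s1) by (unfold s1; lra).
  assert (Hep : 0 < ep) by (unfold ep; apply Rmin_glb_lt; [lra| apply div_pos; lra]).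
  assert (Hep1 : ep <= 1) by apply Rmin_l.
  assert (Hep2 : s1 * ep < e/3).
  { assert (ep <= e / (3 * (s1 + 1))) by apply Rmin_r.
    apply le_div_mul in H; [|lra]. nra. }
  exists eta. split; auto. intros y Hy.
  pose proof (dpos x y) as Hxy0.
  destruct (classic (A y)) as [Ay|nAy].
  - rewrite (G_A x Ax), (G_A y Ay). fold a. pose proof (Hc1' (exist _ y Ay)) as Hh. simpl in Hh.
    assert (d x y < del1) by lra. specialize (Hh H). lra.
  - rewrite (G_A x Ax), (G_nA y nAy). fold a.
    assert (Hp : 0 < pd y) by (apply pd_pos; auto).
    assert (Hpa : pd y <= d x y) by (rewrite dsym; apply (pd_le y a)).
    assert (Hup : Inf (gg y) < f a + e).
    { destruct (Inf_approx a0 (fun b => d y (proj1_sig b)) (fun _ => dpos _ _) (pd y * ep)) as [b Hb].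
      { apply Rmult_lt_0_compat; auto. }
      change (Inf (fun b => d y (proj1_sig b))) with (pd y) in Hb.
      pose proof (Inf_le a0 (gg y) (fun c => gg_pos y c nAy) b) as HI.
      set (u := d y (proj1_sig b)) in *.
      set (t := Rmin (2 * pd y) u / pd y) in *.
      assert (Hgb : gg y b = f b + Kc * u + (s1 * t - s1)) by reflexivity.
      assert (Ht : t * pd y = Rmin (2 * pd y) u) by (unfold t; field; lra).
      assert (Hmin : Rmin (2 * pd y) u <= u) by apply Rmin_r.
      assert (Ht1 : t < 1 + ep).
      { apply (Rmult_lt_reg_r (pd y)); auto. nra. }
      assert (HQ : s1 * t - s1 < s1 * ep) by nra.
      assert (Hu : Kc * u < e/3).
      { assert (u < 2 * eta) by nra. nra. }
      assert (Hxb : d x (proj1_sig b) < del1).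
      { pose proof (dtri x y (proj1_sig b)). fold u in H. nra. }
      pose proof (Hc1' b Hxb). pose proof (Rabs_le_inv _ _ (Rlt_le _ _ H)). lra. }
    assert (Hlo : f a - e/3 <= Inf (gg y)).
    { apply (Inf_ge a0 (gg y) (fun c => gg_pos y c nAy)). intros c.
      destruct (Rlt_or_le (d x (proj1_sig c)) del1) as [Hc|Hc].
      - pose proof (Hc1' c Hc). pose proof (Rabs_le_inv _ _ (Rlt_le _ _ H)).
        pose proof (gg_ge y c nAy). pose proof (dpos y (proj1_sig c)). nra.
      - unfold gg. set (u := d y (proj1_sig c)).
        assert (Hu : 2 * pd y <= u).
        { pose proof (dtri x y (proj1_sig c)). fold u in H. lra. }
        rewrite (Rmin_left _ _ Hu).
        replace (2 * pd y / pd y) with 2 by (field; lra).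
        pose proof (f_lip c a). change (proj1_sig a) with x in H.
        pose proof (dtri (proj1_sig c) y x). rewrite (dsym (proj1_sig c) y), (dsym y x) in H0. fold u in H0.
        pose proof (mul_le lam _ _ Hlam H0). pose proof (mul_le lam _ _ Hlam (Rlt_le _ _ Hy)).
        assert (0 <= u) by apply dpos.
        unfold Kc, s1. rewrite Rmult_plus_distr_r, Rmult_plus_distr_l in *. lra. }
    apply Rabs_def1; lra.
Qed.

Lemma G_cont x e : 0 < e -> exists del, 0 < del /\ forall y, d x y < del -> Rabs (G x - G y) < e.
Proof. intros He. destruct (classic (A x)); [apply G_cont_in|apply G_cont_out]; auto. Qed.

Lemma G_bnd1 (HM : forall R0, exists M, forall a, f a <= R0 -> d (proj1_sig a0) (proj1_sig a) <= M) :
  forall R0, exists M, forall x, G x <= R0 -> d (proj1_sig a0) x <= M.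
Proof.
  intros R0. destruct (HM (R0 + 1)) as [M HMb]. exists (M + Rabs (R0 + 1) / Kc).
  assert (HKc : 0 < Kc) by (unfold Kc; lra).
  intros x Hx. pose proof (G_pos x).
  assert (0 <= Rabs (R0 + 1) / Kc) by (unfold Rdiv; apply Rmult_le_pos; [apply Rabs_pos| left; apply Rinv_0_lt_compat; auto]).
  destruct (classic (A x)) as [Ax|nAx].
  - rewrite (G_A x Ax) in Hx. pose proof (HMb (exist _ x Ax) ltac:(lra)). simpl in H1. lra.
  - rewrite (G_nA x nAx) in Hx.
    destruct (Inf_approx a0 (gg x) (fun c => gg_pos x c nAx) 1 Rlt_0_1) as [b Hb].
    pose proof (gg_ge x b nAx). pose proof (dpos x (proj1_sig b)). pose proof (f_pos b).
    assert (Hk : Kc * d x (proj1_sig b) <= Rabs (R0 + 1)) by (rewrite Rabs_pos_eq; nra).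
    apply mul_le_div in Hk; auto.
    pose proof (HMb b ltac:(nra)) as Hb2.
    pose proof (dtri (proj1_sig a0) (proj1_sig b) x) as Ht. rewrite (dsym (proj1_sig b) x) in Ht. lra.
Qed.

Lemma G_bnd (HM : forall R0, exists M, forall a, f a <= R0 -> d (proj1_sig a0) (proj1_sig a) <= M) :
  forall R0, exists M, forall x y, G x <= R0 -> G y <= R0 -> d x y <= M.
Proof.
  intros R0. destruct (G_bnd1 HM R0) as [M HMb]. exists (M + M). intros x y Hx Hy.
  pose proof (HMb x Hx). pose proof (HMb y Hy). pose proof (dtri x (proj1_sig a0) y).
  rewrite (dsym x (proj1_sig a0)) in H1. lra.
Qed.

Lemma G_growth (c b : R) (Hc : 0 < c) (Hb : 0 <= b)
  (Hg : forall a, c * d (proj1_sig a) (proj1_sig a0) - b <= f a) :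
  forall x, Rmin c Kc * d x (proj1_sig a0) - b <= G x.
Proof.
  intros x. assert (HKc : 0 < Kc) by (unfold Kc; lra).
  assert (Hm : 0 <= Rmin c Kc) by (apply Rmin_glb; lra).
  pose proof (Rmin_l c Kc). pose proof (Rmin_r c Kc).
  destruct (classic (A x)) as [Ax|nAx].
  - rewrite (G_A x Ax). pose proof (Hg (exist _ x Ax)). simpl in H1.
    pose proof (dpos x (proj1_sig a0)).
    pose proof (Rmult_le_compat_r _ _ _ H2 H). lra.
  - rewrite (G_nA x nAx). apply (Inf_ge a0 (gg x) (fun a => gg_pos x a nAx)). intros a.
    pose proof (gg_ge x a nAx). pose proof (Hg a).
    pose proof (dtri x (proj1_sig a) (proj1_sig a0)).
    pose proof (mul_le _ _ _ Hm H3).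
    pose proof (Rmult_le_compat_r _ _ _ (dpos (proj1_sig a) (proj1_sig a0)) H).
    pose proof (Rmult_le_compat_r _ _ _ (dpos x (proj1_sig a)) H0).
    rewrite Rmult_plus_distr_l in H4. lra.
Qed.

Lemma G_ext (a : {x | A x}) : G (proj1_sig a) = f a.
Proof. destruct a as [x Ax]. simpl. apply G_A. Qed.

End Main.
Lemma ext_main {X} (d : X -> X -> R) (Hd : is_metric d) (Hp : proper_space d) A (HA : closed_set d A)
  (phi : {x | A x} -> Rplus_half) (a0 : {x | A x}) (Hphi : morph_A (sub_dist d A) dRplus phi) :
  exists phibar, morph_A d dRplus phibar /\
    (nonzero_norm (sub_dist d A) dRplus phi -> morph_tA d dRplus phibar) /\
    forall a, phibar (proj1_sig a) = phi a.
Proof.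
  destruct Hphi as [Hcont [Hpr [lam [s [Hlam [Hs Hlip]]]]]].
  pose proof (G_pos d Hd A HA phi a0 lam s Hlam Hs) as H0.
  assert (Hc := G_cont d Hd A HA phi a0 lam s Hlam Hs Hlip Hcont).
  assert (HL : exists L s', 0 <= L /\ 0 <= s' /\ forall x y,
     Rabs (G d A phi lam s x - G d A phi lam s y) <= L * d x y + s').
  { exists (Kc lam), (s1 s). unfold Kc, s1. split; [lra|split;[lra|]].
    apply (G_lip d Hd A HA phi a0 lam s Hlam Hs Hlip). }
  assert (HM : forall R0, exists M, forall a, f A phi a <= R0 -> d (proj1_sig a0) (proj1_sig a) <= M).
  { intros R0. pose proof (Hpr _ (interval_compact R0)) as Hcomp.
    destruct (compact_bounded (sub_dist d A) _ ltac:(intros; unfold sub_dist; apply Hd) Hcomp a0) as [M HMb].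
    exists M. intros a Ha. apply (HMb a Ha). }
  assert (Hb := G_bnd d Hd A HA phi a0 lam s Hlam Hs HM).
  exists (GF _ H0). split; [|split].
  - apply (Gmorph d Hp _ H0 Hc HL Hb).
  - intros Hnz. apply (Gmorph_t d Hd Hp _ H0 Hc HL Hb).
    intros _. destruct (Hnz a0 (exist (fun r => 0 <= r) 0 (Rle_refl 0))) as [c [b [Hc0 [Hb0 Hg]]]].
    exists (proj1_sig a0), (Rmin c (Kc lam)), b. split; [|split]; auto.
    + apply Rmin_glb_lt; unfold Kc; lra.
    + apply (G_growth d Hd A HA phi a0 lam s Hlam Hs c b Hc0 Hb0).
      intros a. specialize (Hg a). unfold dRplus, sub_dist in Hg. simpl in Hg.
      unfold f. pose proof (proj2_sig (phi a)). simpl in H.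
      rewrite Rminus_0_r, Rabs_pos_eq in Hg by auto. lra.
  - intros a. apply Rplus_eq. simpl. apply G_ext.
Qed.

Lemma ext_empty {X} (d : X -> X -> R) (Hd : is_metric d) (Hp : proper_space d) (A : X -> Prop)
  (phi : {x | A x} -> Rplus_half) (nA : ~ exists x, A x) :
  exists phibar, morph_A d dRplus phibar /\
    (nonzero_norm (sub_dist d A) dRplus phi -> morph_tA d dRplus phibar) /\
    forall a, phibar (proj1_sig a) = phi a.
Proof.
  destruct Hd as [dpos [dz [dsym dtri]]].
  destruct (classic (exists x : X, True)) as [[x0 _]|nX].
  - set (G := fun x => d x x0).
    assert (H0 : forall x, 0 <= G x) by (intros; apply dpos).
    assert (Hc : forall x e, 0 < e -> exists del, 0 < del /\ forall y, d x y < del -> Rabs (G x - G y) < e).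
    { intros x e He. exists e. split; auto. intros y Hy. unfold G.
      pose proof (dtri x y x0) as T1. pose proof (dtri y x x0) as T2. rewrite (dsym y x) in T2.
      pose proof (dpos x y). split_Rabs; lra. }
    assert (HL : exists L s, 0 <= L /\ 0 <= s /\ forall x y, Rabs (G x - G y) <= L * d x y + s).
    { exists 1, 0. split; [lra|split;[lra|]]. intros x y. unfold G.
      pose proof (dtri x y x0) as T1. pose proof (dtri y x x0) as T2. rewrite (dsym y x) in T2.
      pose proof (dpos x y). split_Rabs; lra. }
    assert (Hb : forall R0, exists M, forall x y, G x <= R0 -> G y <= R0 -> d x y <= M).
    { intros R0. exists (R0 + R0). intros x y Hx Hy. unfold G in *. pose proof (dtri x x0 y).
      rewrite (dsym x0 y) in H. lra. }
    exists (GF G H0). split; [|split].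
    + apply (Gmorph d Hp G H0 Hc HL Hb).
    + intros _. apply (Gmorph_t d (conj dpos (conj dz (conj dsym dtri))) Hp G H0 Hc HL Hb).
      intros _. exists x0, 1, 0. split; [lra|split;[lra|]]. intros x. unfold G. lra.
    + intros [x Ax]. exfalso. eauto.
  - set (G := fun _ : X => 0).
    assert (H0 : forall x, 0 <= G x) by (intros; unfold G; lra).
    exists (GF G H0). split; [|split].
    + apply (Gmorph d Hp G H0); [intros x; exfalso; eauto | exists 0, 0; split; [lra|split;[lra|]]; intros x; exfalso; eauto | intros R0; exists 0; intros x; exfalso; eauto].
    + intros _. apply (Gmorph_t d (conj dpos (conj dz (conj dsym dtri))) Hp G H0);
        [intros x; exfalso; eauto | exists 0, 0; split; [lra|split;[lra|]]; intros x; exfalso; eauto | intros R0; exists 0; intros x; exfalso; eauto | intros x; exfalso; eauto].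
    + intros [x Ax]. exfalso. eauto.
Qed.

Theorem theorem4p1 :
  absolute_extensor (@morph_A) Rplus_half dRplus /\
  absolute_extensor (@morph_tA) Rplus_half dRplus.
Proof.
  split; intros X d Hd Hp A HA phi Hphi.
  - destruct (classic (exists x, A x)) as [[x Ax]|nA].
    + destruct (ext_main d Hd Hp A HA phi (exist _ x Ax) Hphi) as [pb [H1 [_ H3]]]. eauto.
    + destruct (ext_empty d Hd Hp A phi nA) as [pb [H1 [_ H3]]]. eauto.
  - destruct Hphi as [HphiA Hnz].
    destruct (classic (exists x, A x)) as [[x Ax]|nA].
    + destruct (ext_main d Hd Hp A HA phi (exist _ x Ax) HphiA) as [pb [H1 [H2 H3]]]. eauto.
    + destruct (ext_empty d Hd Hp A phi nA) as [pb [H1 [H2 H3]]]. eauto.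
Qed.
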